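(* Let $\sigma(x,y)=(x\rightharpoonup y,x\leftharpoonup y)$ be an involutive non-degenerate quiver-theoretic Yang--Baxter map on a quiver $\mathscr{A}$ over $\Lambda$, and let $E$ be the closure of (the image of) $\mathscr{A}$ under right-lcms in the structure category $\mathscr{C}(\sigma)$. Let $x\bullet y:=(\cdot\leftharpoonup x)^{-1}(y)$ for $\mathfrak{t}(x)=\mathfrak{t}(y)$ and $x\,\tilde\star\,y:=y\bullet x$. For $\mu\in\Lambda$ and a finite set $J=\{y_1,\dots,y_n\}\subseteq\mathscr{A}(\Lambda,\mu)$ of pairwise distinct arrows, define $\tilde\Omega_1(y_1)=y_1$, $\tilde\Omega_j(y_1,\dots,y_j)=\tilde\Omega_{j-1}(y_1,y_3,\dots,y_j)\,\tilde\star\,\tilde\Omega_{j-1}(y_2,\dots,y_j)$ for $2\le j\le n$, and $\tilde\Delta_J=[\tilde\Omega_n(y_1,\dots,y_n)|\tilde\Omega_{n-1}(y_2,\dots,y_n)|\dots|\tilde\Omega_1(y_n)]\in\mathscr{C}(\sigma)$ (the left-lcm of $J$). Then $E=\{\tilde\Delta_J\mid\mu\in\Lambda,\ J\subseteq\mathscr{A}(\Lambda,\mu),\ 1\le|J|<\infty\}\cup\mathbf{1}_{\mathscr{A}}$, where $\mathbf{1}_{\mathscr{A}}$ is the set of identities of $\mathscr{C}(\sigma)$.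
   Context: A quiver-theoretic Yang--Baxter map is a source/target-preserving map $\sigma$ on composable pairs satisfying the braid relation; involutive: $\sigma^2=\mathrm{id}$; non-degenerate: all $x\rightharpoonup\cdot\colon\mathscr{A}(\mathfrak{t}(x),\Lambda)\to\mathscr{A}(\mathfrak{s}(x),\Lambda)$ and $\cdot\leftharpoonup y\colon\mathscr{A}(\Lambda,\mathfrak{s}(y))\to\mathscr{A}(\Lambda,\mathfrak{t}(y))$ bijective. $\mathscr{C}(\sigma)$ is the category presented by generators $\mathscr{A}$ and relations $x|y\sim(x\rightharpoonup y)|(x\leftharpoonup y)$; $[w]$ denotes the class of a path $w$. Right-lcm (resp. left-lcm): a common right- (resp. left-) multiple that left- (resp. right-) divides every common right- (resp. left-) multiple. *)

(* Defs.v *)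
From Stdlib Require Import List Relations ClassicalEpsilon.
Import ListNotations.
Set Implicit Arguments.

(* A quiver over Lambda: arrows of type A with source s and target t.
   A composable pair (x, y) means t x = s y (paths x|y are read left to right).
   A quiver-theoretic map on composable pairs is given by its two components
   lf x y = x ⇀ y and rf x y = x ↼ y. *)
Section QYB.
Variables (Lam A : Type) (s t : A -> Lam) (lf rf : A -> A -> A).

Definition sigma12 (w : A * A * A) : A * A * A :=
  let '(x, y, z) := w in (lf x y, rf x y, z).
Definition sigma23 (w : A * A * A) : A * A * A :=
  let '(x, y, z) := w in (x, lf y z, rf y z).

Definition st_preserving : Prop :=
  forall x y, t x = s y ->
    s (lf x y) = s x /\ t (lf x y) = s (rf x y) /\ t (rf x y) = t y.

Definition braid : Prop :=
  forall x y z, t x = s y -> t y = s z ->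
    sigma12 (sigma23 (sigma12 (x, y, z))) = sigma23 (sigma12 (sigma23 (x, y, z))).

Definition involutive : Prop :=
  forall x y, t x = s y -> lf (lf x y) (rf x y) = x /\ rf (lf x y) (rf x y) = y.

Definition nondegenerate : Prop :=
  (forall x,
     (forall y y', s y = t x -> s y' = t x -> lf x y = lf x y' -> y = y') /\
     (forall z, s z = s x -> exists y, s y = t x /\ lf x y = z)) /\
  (forall y,
     (forall z z', t z = s y -> t z' = s y -> rf z y = rf z' y -> z = z') /\
     (forall w, t w = t y -> exists z, t z = s y /\ rf z y = w)).

Definition qYB_map : Prop := st_preserving /\ braid.

(* x • y := (· ↼ x)^{-1}(y), for t x = t y (junk value otherwise) *)
Definition bullet (x y : A) : A :=
  epsilon (inhabits y) (fun z => t z = s x /\ rf z x = y).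

Definition tstar (x y : A) : A := bullet y x.

(* OmegaT y ys = ~Ω_{n}(y, ys_1, ..., ys_{n-1}):
   ~Ω_1(y1) = y1,
   ~Ω_j(y1,y2,...,yj) = ~Ω_{j-1}(y1,y3,...,yj) ~⋆ ~Ω_{j-1}(y2,...,yj). *)
Fixpoint OmegaT (y1 : A) (ys : list A) : A :=
  match ys with
  | [] => y1
  | y2 :: r => tstar (OmegaT y1 r) (OmegaT y2 r)
  end.

Fixpoint DeltaList (y1 : A) (ys : list A) : list A :=
  OmegaT y1 ys :: match ys with [] => [] | y2 :: r => DeltaList y2 r end.

Record path := Path { psrc : Lam; parr : list A }.

Fixpoint chain (l : Lam) (xs : list A) : Prop :=
  match xs with [] => True | x :: r => s x = l /\ chain (t x) r end.
Fixpoint tgt_from (l : Lam) (xs : list A) : Lam :=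
  match xs with [] => l | x :: r => tgt_from (t x) r end.

Definition valid (p : path) : Prop := chain (psrc p) (parr p).
Definition ptgt (p : path) : Lam := tgt_from (psrc p) (parr p).
Definition comp (p q : path) : path := Path (psrc p) (parr p ++ parr q).
Definition ident (l : Lam) : path := Path l [].
Definition arrow (x : A) : path := Path (s x) [x].

Inductive step : list A -> list A -> Prop :=
  | step_rel : forall p q x y, t x = s y ->
      step (p ++ x :: y :: q) (p ++ lf x y :: rf x y :: q).

(* equality of morphisms of C(sigma): [p] = [q] *)
Definition peq (p q : path) : Prop :=
  psrc p = psrc q /\ clos_refl_sym_trans (list A) step (parr p) (parr q).

Definition ldiv (f m : path) : Prop :=
  exists k, valid k /\ psrc k = ptgt f /\ peq m (comp f k).

Definition common_rmul (f g m : path) : Prop := valid m /\ ldiv f m /\ ldiv g m.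

Definition is_rlcm (f g m : path) : Prop :=
  common_rmul f g m /\ forall n, common_rmul f g n -> ldiv m n.

(* E: closure of (the image of) A under right-lcms; identities are included
   (right-lcm of the empty family at a vertex) *)
Inductive inE : path -> Prop :=
  | inE_id : forall l, inE (ident l)
  | inE_arr : forall x, inE (arrow x)
  | inE_lcm : forall f g m, inE f -> inE g -> is_rlcm f g m -> inE m.

End QYB.

(* Main.v *)
Require Import Defs.
From Stdlib Require Import List Relations ClassicalEpsilon Classical Permutation.
Import ListNotations.
Set Implicit Arguments.

Fixpoint pi {A : Type} (lf : A -> A -> A) (w : list A) : list A :=
  match w with [] => [] | x :: w' => x :: map (lf x) (pi lf w') end.
Fixpoint lam {A : Type} (lf : A -> A -> A) (w : list A) (z : A) : A :=
  match w with [] => z | x :: w' => lf x (lam lf w' z) end.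

Definition good {Lam A : Type} (s t : A -> Lam) (lf rf : A -> A -> A) : Prop :=
  (forall x y, t x = s y -> s (lf x y) = s x) /\
  (forall x y, t x = s y -> t (lf x y) = s (rf x y)) /\
  (forall x y, t x = s y -> t (rf x y) = t y) /\
  (forall x y z, t x = s y -> t y = s z ->
      lf x (lf y z) = lf (lf x y) (lf (rf x y) z)) /\
  (forall x y, t x = s y -> lf (lf x y) (rf x y) = x) /\
  (forall x y y', s y = t x -> s y' = t x -> lf x y = lf x y' -> y = y') /\
  (forall x z, s z = s x -> exists y, s y = t x /\ lf x y = z).

Lemma chain_app {Lam A : Type} (s t : A -> Lam) : forall u v l,
  chain s t l (u ++ v) <-> chain s t l u /\ chain s t (tgt_from t l u) v.
Proof. induction u; simpl; intros; [tauto|]. rewrite IHu. tauto. Qed.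

Lemma tgt_app {Lam A : Type} (t : A -> Lam) : forall u v l,
  tgt_from t l (u ++ v) = tgt_from t (tgt_from t l u) v.
Proof. induction u; simpl; auto. Qed.

Lemma pi_app {A : Type} (lf : A -> A -> A) : forall p u,
  pi lf (p ++ u) = pi lf p ++ map (lam lf p) (pi lf u).
Proof.
  induction p; simpl; intros.
  - rewrite map_id; auto.
  - rewrite IHp, map_app, map_map. reflexivity.
Qed.

Lemma lam_app {A : Type} (lf : A -> A -> A) : forall u v z,
  lam lf (u ++ v) z = lam lf u (lam lf v z).
Proof. induction u; simpl; intros; congruence. Qed.

Lemma pi_nil {A : Type} (lf : A -> A -> A) w : pi lf w = [] -> w = [].
Proof. destruct w; simpl; congruence. Qed.

Lemma step_cons {Lam A : Type} (s t : A -> Lam) lf rf a : forall w w',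
  clos_refl_sym_trans _ (step s t lf rf) w w' ->
  clos_refl_sym_trans _ (step s t lf rf) (a :: w) (a :: w').
Proof.
  intros w w' H; induction H.
  - apply rst_step. destruct H. apply (step_rel s t lf rf (a :: p) q x y H).
  - apply rst_refl.
  - apply rst_sym; auto.
  - eapply rst_trans; eauto.
Qed.

Lemma step_rev {Lam A : Type} (s t : A -> Lam) lf rf : forall w w',
  step s t lf rf w w' ->
  step t s (fun x y => rf y x) (fun x y => lf y x) (rev w) (rev w').
Proof.
  intros w w' H; destruct H.
  rewrite !rev_app_distr. simpl. rewrite <- !app_assoc. simpl.
  apply (step_rel t s (fun x y => rf y x) (fun x y => lf y x) (rev q) (rev p) y x).
  auto.
Qed.

Lemma rst_rev {Lam A : Type} (s t : A -> Lam) lf rf : forall w w',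
  clos_refl_sym_trans _ (step s t lf rf) w w' ->
  clos_refl_sym_trans _ (step t s (fun x y => rf y x) (fun x y => lf y x)) (rev w) (rev w').
Proof.
  intros w w' H; induction H.
  - apply rst_step; apply step_rev; auto.
  - apply rst_refl.
  - apply rst_sym; auto.
  - eapply rst_trans; eauto.
Qed.

Lemma chain_rev {Lam A : Type} (s t : A -> Lam) : forall w l,
  chain s t l w -> chain t s (tgt_from t l w) (rev w) /\ tgt_from s (tgt_from t l w) (rev w) = l.
Proof.
  induction w; simpl; intros l H; [auto|].
  destruct H as [H1 H2]. destruct (IHw _ H2) as [C T].
  rewrite chain_app, tgt_app. simpl. rewrite T. subst. tauto.
Qed.

Section Gen.
Variables (Lam A : Type) (s t : A -> Lam) (lf rf : A -> A -> A).
Hypothesis G : good s t lf rf.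

Lemma pi_src : forall w l, chain s t l w -> forall z, In z (pi lf w) -> s z = l.
Proof.
  destruct G as (H1 & _).
  induction w; simpl; intros l C z Hz; [tauto|].
  destruct C as [C1 C2]. destruct Hz as [<-|Hz]; auto.
  apply in_map_iff in Hz. destruct Hz as (z1 & <- & Hz1).
  rewrite H1; auto. symmetry. eapply IHw; eauto.
Qed.

Lemma step_chain : forall w w', step s t lf rf w w' -> forall l,
  (chain s t l w <-> chain s t l w') /\ tgt_from t l w = tgt_from t l w'.
Proof.
  destruct G as (H1 & H2 & H3 & _).
  intros w w' H; destruct H as [p q x y Hxy]; intros l.
  rewrite !chain_app, !tgt_app. simpl.
  rewrite H1, H2, H3 by auto. split; [|auto].
  split; intros (C & C1 & C2 & C3); repeat split; auto; congruence.
Qed.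

Lemma rst_chain : forall w w', clos_refl_sym_trans _ (step s t lf rf) w w' -> forall l,
  (chain s t l w <-> chain s t l w') /\ tgt_from t l w = tgt_from t l w'.
Proof.
  intros w w' H; induction H; intros l.
  - apply step_chain; auto.
  - tauto.
  - destruct (IHclos_refl_sym_trans l). split; [tauto|auto].
  - destruct (IHclos_refl_sym_trans1 l), (IHclos_refl_sym_trans2 l).
    split; [tauto|congruence].
Qed.

Lemma pi_step : forall w w', step s t lf rf w w' -> forall l, chain s t l w ->
  Permutation (pi lf w) (pi lf w').
Proof.
  destruct G as (H1 & H2 & H3 & Hbr & Hinv & _).
  intros w w' H; destruct H as [p q x y Hxy]; intros l C.
  rewrite !pi_app. apply Permutation_app_head. apply Permutation_map.
  apply chain_app in C. destruct C as (_ & C1 & C2 & C3).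
  simpl. rewrite Hinv by auto. rewrite !map_map.
  erewrite map_ext_in.
  - apply perm_swap.
  - intros z Hz. simpl. apply Hbr; auto.
    symmetry. eapply pi_src; eauto.
Qed.

Lemma pi_rst : forall w w', clos_refl_sym_trans _ (step s t lf rf) w w' -> forall l,
  chain s t l w -> Permutation (pi lf w) (pi lf w').
Proof.
  intros w w' H; induction H; intros l C.
  - eapply pi_step; eauto.
  - auto.
  - symmetry. apply (IHclos_refl_sym_trans l). apply (rst_chain H l). auto.
  - eapply perm_trans. eapply IHclos_refl_sym_trans1; eauto.
    eapply IHclos_refl_sym_trans2. apply (rst_chain H l); auto.
Qed.

Lemma lam_src : forall w l, chain s t l w -> forall y, s y = tgt_from t l w -> s (lam lf w y) = l.
Proof.
  destruct G as (H1 & _).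
  induction w; simpl; intros l C y Hy; auto.
  destruct C. rewrite H1; auto. symmetry; eapply IHw; eauto.
Qed.

Lemma lam_inj : forall w l, chain s t l w -> forall y y', s y = tgt_from t l w ->
  s y' = tgt_from t l w -> lam lf w y = lam lf w y' -> y = y'.
Proof.
  destruct G as (_ & _ & _ & _ & _ & Hinj & _).
  induction w; simpl; intros l C y y' Hy Hy' E; auto.
  destruct C. eapply IHw; eauto. eapply Hinj; eauto; eapply lam_src; eauto.
Qed.

Lemma lam_surj : forall w l, chain s t l w -> forall z, s z = l ->
  exists y, s y = tgt_from t l w /\ lam lf w y = z.
Proof.
  destruct G as (_ & _ & _ & _ & _ & _ & Hsurj).
  induction w; simpl; intros l C z Hz; eauto.
  destruct C as [C1 C2]. destruct (Hsurj a z) as (z1 & E1 & E2); [congruence|].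
  destruct (IHw _ C2 z1 E1) as (y & Ey & Ey2). exists y; split; congruence.
Qed.

Lemma lam_surj_list : forall w l, chain s t l w -> forall L, (forall z, In z L -> s z = l) ->
  exists L', map (lam lf w) L' = L /\ forall y, In y L' -> s y = tgt_from t l w.
Proof.
  intros w l C; induction L; intros HL.
  - exists []; simpl; split; auto; tauto.
  - destruct (@lam_surj w l C a) as (y & E1 & E2); [apply HL; simpl; auto|].
    destruct IHL as (L' & F1 & F2); [intros; apply HL; simpl; auto|].
    exists (y :: L'); simpl; split; [congruence|]. intros y0 [<-|H]; auto.
Qed.

Lemma pi_surj : forall L l, (forall z, In z L -> s z = l) ->
  exists w, chain s t l w /\ pi lf w = L.
Proof.
  intro L. remember (length L) as n. revert L Heqn. induction n; intros L Hn l HL.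
  - destruct L; [|discriminate]. exists []; simpl; auto.
  - destruct L as [|a L]; [discriminate|]. simpl in Hn. injection Hn; intro Hn'.
    assert (C : chain s t l [a]) by (simpl; split; auto; apply HL; simpl; auto).
    destruct (@lam_surj_list [a] l C L) as (L' & E & HL'); [intros; apply HL; simpl; auto|].
    simpl in HL'. destruct (IHn L') with (l := t a) as (w & Cw & Pw); auto.
    { rewrite <- E in Hn'. rewrite length_map in Hn'. auto. }
    exists (a :: w); simpl; split; [split; auto; apply HL; simpl; auto|].
    rewrite Pw. simpl in E. rewrite <- E. reflexivity.
Qed.

Lemma mem_prefix : forall w l, chain s t l w -> forall z, In z (pi lf w) ->
  exists w', clos_refl_sym_trans _ (step s t lf rf) w (z :: w').
Proof.
  induction w; simpl; intros l C z Hz; [tauto|].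
  destruct C as [C1 C2]. destruct Hz as [<-|Hz]; [exists w; apply rst_refl|].
  apply in_map_iff in Hz. destruct Hz as (z1 & <- & Hz1).
  destruct (IHw _ C2 z1 Hz1) as (w2 & R).
  exists (rf a z1 :: w2). eapply rst_trans. apply step_cons. apply R.
  apply rst_step. apply (step_rel s t lf rf [] w2 a z1).
  symmetry. eapply pi_src; eauto.
Qed.

Lemma perm_map_inj : forall (f : A -> A) (P : A -> Prop), 
  (forall x y, P x -> P y -> f x = f y -> x = y) ->
  forall L1 L2, (forall x, In x L1 -> P x) -> (forall x, In x L2 -> P x) ->
  Permutation (map f L1) (map f L2) -> Permutation L1 L2.
Proof.
  intros f P Hf L1 L2 H1 H2 HP.
  apply Permutation_map_inv in HP. destruct HP as (L3 & E & HP).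
  assert (L1 = L3).
  { assert (forall x, In x L3 -> P x) as H3.
    { intros x Hx. apply H2. apply Permutation_in with L3; auto. symmetry; auto. }
    clear HP H2. revert L3 E H3. induction L1; destruct L3; simpl; intros E H3; try discriminate; auto.
    injection E; intros; f_equal; [apply Hf; auto|apply IHL1; auto]; intros; apply H1; simpl; auto. } 
  subst. symmetry. auto.
Qed.

Lemma pi_inj : forall u v l, chain s t l u -> chain s t l v ->
  Permutation (pi lf u) (pi lf v) -> clos_refl_sym_trans _ (step s t lf rf) u v.
Proof.
  destruct G as (_ & _ & _ & _ & _ & Hinj & _).
  induction u; intros v l Cu Cv P.
  - simpl in P. apply Permutation_nil in P. apply pi_nil in P. subst. apply rst_refl.
  - assert (Ha : In a (pi lf v)) by (eapply Permutation_in; eauto; simpl; auto).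
    destruct (@mem_prefix v l Cv a Ha) as (v' & R).
    assert (Cv' : chain s t l (a :: v')) by (apply (rst_chain R l); auto).
    pose proof (pi_rst R l Cv) as P2.
    assert (P3 : Permutation (pi lf (a :: u)) (pi lf (a :: v'))) by (eapply perm_trans; eauto).
    simpl in P3. apply Permutation_cons_inv in P3.
    destruct Cu as [Cu1 Cu2]. destruct Cv' as [_ Cv2].
    assert (P4 : Permutation (pi lf u) (pi lf v')).
    { apply perm_map_inj with (f := lf a) (P := fun y => s y = t a).
    - intros; eapply Hinj; eauto.
    - intros x Hx; exact (@pi_src u (t a) Cu2 x Hx).
    - intros x Hx; exact (@pi_src v' (t a) Cv2 x Hx).
    - exact P3. }
    eapply rst_trans; [|apply rst_sym; apply R]. apply step_cons. eapply IHu; eauto.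
Qed.

End Gen.

Lemma good_of {Lam A : Type} (s t : A -> Lam) (lf rf : A -> A -> A) :
  qYB_map s t lf rf -> involutive s t lf rf -> nondegenerate s t lf rf ->
  good s t lf rf /\ good t s (fun x y => rf y x) (fun x y => lf y x).
Proof.
  intros [Hst Hbr] Hinv [Hn1 Hn2].
  assert (B : forall x y z, t x = s y -> t y = s z ->
     lf x (lf y z) = lf (lf x y) (lf (rf x y) z) /\
     rf (rf x y) z = rf (rf x (lf y z)) (rf y z)).
  { intros x y z H1 H2. pose proof (Hbr x y z H1 H2) as E.
    unfold sigma12, sigma23 in E. simpl in E. injection E; intros. split; auto. }
  split; repeat split.
  - intros; apply Hst; auto.
  - intros; apply Hst; auto.
  - intros; apply Hst; auto.
  - intros; apply B; auto.
  - intros; apply Hinv; auto.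
  - intros x y y' H1 H2 E. eapply (proj1 (Hn1 x)); eauto.
  - intros x z H. destruct (proj2 (Hn1 x) z H) as (y & ? & ?). eauto.
  - intros x y H. apply Hst; auto.
  - intros x y H. symmetry. apply Hst; auto.
  - intros x y H. apply Hst; auto.
  - intros x y z H1 H2. simpl. refine (proj2 (B z y x _ _)); congruence.
  - intros x y H. apply Hinv; auto.
  - intros x y y' H1 H2 E. eapply (proj1 (Hn2 x)); eauto.
  - intros x z H. destruct (proj2 (Hn2 x) z H) as (y & ? & ?). eauto.
Qed.

Lemma not_NoDup_perm {A : Type} : forall L : list A, ~ NoDup L ->
  exists z R, Permutation L (z :: z :: R).
Proof.
  induction L; intros H.
  - exfalso; apply H; constructor.
  - destruct (classic (In a L)) as [Hi|Hn].
    + apply in_split in Hi. destruct Hi as (l1 & l2 & ->).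
      exists a, (l1 ++ l2). apply perm_skip. symmetry. apply Permutation_middle.
    + destruct IHL as (z & R & P).
      { intro Hd; apply H; constructor; auto. }
      exists z, (a :: R). eapply perm_trans. apply perm_skip, P.
      eapply perm_trans. apply perm_swap. apply perm_skip. apply perm_swap.
Qed.

Lemma rf_fix {Lam A : Type} (s t : A -> Lam) (lf rf : A -> A -> A) :
  good s t lf rf -> forall z u, t z = s u -> lf z u = z -> rf z u = u.
Proof.
  intros (H1 & H2 & H3 & Hbr & Hinv & Hinj & _) z u H E.
  pose proof (Hinv z u H) as I. rewrite E in I.
  apply (Hinj z); auto.
  - rewrite <- H2 by auto. rewrite E. auto.
  - congruence.
Qed.

Lemma dup_transfer {Lam A : Type} (s t : A -> Lam) (lf rf : A -> A -> A) :
  good s t lf rf -> good t s (fun x y => rf y x) (fun x y => lf y x) ->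
  forall w l, chain s t l w -> NoDup (pi (fun x y => rf y x) (rev w)) -> NoDup (pi lf w).
Proof.
  intros G Gm w l C Nd. apply NNPP. intro Hn.
  apply not_NoDup_perm in Hn. destruct Hn as (z & R & P).
  assert (Hz : In z (pi lf w)) by (eapply Permutation_in; [symmetry; exact P|simpl; auto]).
  destruct (mem_prefix G _ _ C _ Hz) as (w1 & R1).
  assert (C1 : chain s t l (z :: w1)) by (apply (rst_chain G R1 l); auto).
  pose proof (pi_rst G R1 l C) as P1.
  assert (P2 : Permutation (pi lf (z :: w1)) (z :: z :: R)) by (eapply perm_trans; [symmetry; exact P1|exact P]).
  simpl in P2. apply Permutation_cons_inv in P2.
  assert (Hz2 : In z (map (lf z) (pi lf w1))) by (eapply Permutation_in; [symmetry; exact P2|simpl; auto]).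
  apply in_map_iff in Hz2. destruct Hz2 as (u & Eu & Hu).
  destruct C1 as [C1a C1b].
  assert (Su : s u = t z) by (eapply pi_src; eauto).
  destruct (mem_prefix G _ _ C1b _ Hu) as (w2 & R2).
  assert (R3 : clos_refl_sym_trans _ (step s t lf rf) w (z :: u :: w2)).
  { eapply rst_trans. exact R1. apply step_cons. exact R2. }
  apply rst_rev in R3.
  destruct (chain_rev _ _ _ _ C) as [Cm _].
  pose proof (pi_rst Gm R3 _ Cm) as P3.
  apply (Permutation_NoDup P3) in Nd.
  simpl in Nd. rewrite <- app_assoc in Nd. simpl in Nd.
  rewrite pi_app in Nd. simpl in Nd.
  rewrite (@rf_fix _ _ s t lf rf G z u) in Nd by congruence.
  apply NoDup_app_remove_l in Nd. simpl in Nd.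
  inversion Nd. simpl in *. tauto.
Qed.

Lemma bullet_spec {Lam A : Type} (s t : A -> Lam) (lf rf : A -> A -> A) :
  nondegenerate s t lf rf -> forall x y, t x = t y ->
  t (bullet s t rf x y) = s x /\ rf (bullet s t rf x y) x = y.
Proof.
  intros [_ Hn2] x y H. unfold bullet. apply epsilon_spec.
  apply (proj2 (Hn2 x)). auto.
Qed.

Section Delta.
Variables (Lam A : Type) (s t : A -> Lam) (rf : A -> A -> A) (mu : Lam).
Hypothesis Hbul : forall x y, t x = t y ->
  t (bullet s t rf x y) = s x /\ rf (bullet s t rf x y) x = y.

Definition Tr (r : list A) : Lam :=
  match r with [] => mu | a :: r' => s (OmegaT s t rf a r') end.

Lemma om_tgt : forall r, (forall y, In y r -> t y = mu) ->
  forall y, t y = mu -> t (OmegaT s t rf y r) = Tr r.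
Proof.
  induction r; simpl; intros Hr y Hy; auto.
  unfold tstar. apply Hbul.
  rewrite !IHr; auto.
Qed.

Lemma delta_chain : forall r, (forall y, In y r -> t y = mu) ->
  forall y, t y = mu ->
  chain s t (s (OmegaT s t rf y r)) (DeltaList s t rf y r) /\
  tgt_from t (s (OmegaT s t rf y r)) (DeltaList s t rf y r) = mu.
Proof.
  induction r; intros Hr y Hy.
  - simpl. auto.
  - change (DeltaList s t rf y (a :: r)) with
      (OmegaT s t rf y (a :: r) :: DeltaList s t rf a r).
    simpl chain. simpl tgt_from.
    pose proof (om_tgt (a :: r) Hr Hy) as E. simpl in E. rewrite E.
    destruct (IHr (fun z H => Hr z (or_intror H)) a (Hr a (or_introl eq_refl))).
    auto.
Qed.

Definition DL' (r : list A) : list A :=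
  match r with [] => [] | a :: r' => DeltaList s t rf a r' end.

Lemma DL_eq : forall y r, DeltaList s t rf y r = OmegaT s t rf y r :: DL' r.
Proof. intros y r; destruct r; reflexivity. Qed.

Lemma lam_rev_cons : forall a w z,
  lam (fun x y => rf y x) (rev (a :: w)) z = lam (fun x y => rf y x) (rev w) (rf z a).
Proof. intros. simpl. rewrite lam_app. reflexivity. Qed.

Lemma rho_lemma : forall r, (forall y, In y r -> t y = mu) ->
  forall y, t y = mu -> lam (fun x y => rf y x) (rev (DL' r)) (OmegaT s t rf y r) = y.
Proof.
  induction r; intros Hr y Hy; [reflexivity|].
  change (DL' (a :: r)) with (DeltaList s t rf a r). rewrite DL_eq.
  rewrite lam_rev_cons. simpl OmegaT. unfold tstar.
  assert (E : t (OmegaT s t rf a r) = t (OmegaT s t rf y r)).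
  { rewrite !om_tgt; auto; intros; apply Hr; simpl; auto. }
  rewrite (proj2 (Hbul E)). apply IHr; auto; intros; apply Hr; simpl; auto.
Qed.

Lemma pi_delta : forall r, (forall y, In y r -> t y = mu) ->
  forall y, t y = mu -> pi (fun x y => rf y x) (rev (DeltaList s t rf y r)) = rev (y :: r).
Proof.
  induction r; intros Hr y Hy; [reflexivity|].
  change (DeltaList s t rf y (a :: r)) with (OmegaT s t rf y (a :: r) :: DL' (a :: r)).
  change (rev (OmegaT s t rf y (a :: r) :: DL' (a :: r))) with
    (rev (DL' (a :: r)) ++ [OmegaT s t rf y (a :: r)]).
  rewrite pi_app. cbn [map].
  pose proof (rho_lemma (a :: r) Hr Hy) as E.
  change (DL' (a :: r)) with (DeltaList s t rf a r) in *. cbn [pi map]. rewrite E. rewrite IHr; [reflexivity|intros; apply Hr; simpl; auto|apply Hr; simpl; auto].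
Qed.

End Delta.

Section M1.
Variables (Lam A : Type) (s t : A -> Lam) (lf rf : A -> A -> A).
Hypothesis G : good s t lf rf.

Lemma ldiv_sub : forall f m, valid s t f -> valid s t m -> ldiv s t lf rf f m ->
  psrc m = psrc f /\ exists R, Permutation (pi lf (parr m)) (pi lf (parr f) ++ R).
Proof.
  intros f m Vf Vm (k & Vk & Sk & Sm & Rm). split; auto.
  simpl in Rm. pose proof (pi_rst G Rm (psrc m) Vm) as P.
  rewrite pi_app in P. eauto.
Qed.

Lemma sub_ldiv : forall f m R, valid s t f -> valid s t m -> psrc m = psrc f ->
  Permutation (pi lf (parr m)) (pi lf (parr f) ++ R) -> ldiv s t lf rf f m.
Proof.
  intros f m R Vf Vm Sm P.
  assert (HR : forall z, In z R -> s z = psrc f).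
  { intros z Hz. rewrite <- Sm. eapply (pi_src G (parr m)); auto.
    eapply Permutation_in; [symmetry; exact P|]. apply in_or_app; auto. }
  destruct (lam_surj_list G (parr f) Vf R HR) as (L' & E & HL').
  destruct (pi_surj G L' HL') as (w & Cw & Pw).
  exists (Path (ptgt t f) w). unfold valid; simpl. split; [exact Cw|split; [reflexivity|]].
  split; [exact Sm|]. simpl. apply (pi_inj G _ _ (psrc m)); auto.
  - apply chain_app. rewrite Sm. split; auto.
  - rewrite pi_app, Pw, E. auto.
Qed.

Lemma inE_valid : forall p, inE s t lf rf p -> valid s t p.
Proof.
  intros p H; induction H.
  - exact I.
  - unfold valid; simpl; auto.
  - destruct H1 as ((V & _) & _). auto.
Qed.

Lemma union_ex : forall (L2 L1 : list A), NoDup L1 -> NoDup L2 ->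
  exists U, NoDup U /\ (exists R, Permutation U (L1 ++ R)) /\
    (exists R, Permutation U (L2 ++ R)) /\ forall z, In z U -> In z L1 \/ In z L2.
Proof.
  induction L2 as [|a L2 IH]; intros L1 N1 N2.
  - exists L1. split; auto. split; [exists []; rewrite app_nil_r; auto|].
    split; [exists L1; auto|]. auto.
  - inversion N2; subst.
    destruct (IH L1 N1 H2) as (U & NU & (R1 & P1) & (R2 & P2) & HU).
    destruct (classic (In a U)) as [Ha|Ha].
    + exists U. split; auto. split; [eauto|]. split.
      * assert (In a R2).
        { apply (Permutation_in _ P2) in Ha. apply in_app_or in Ha. tauto. }
        apply in_split in H. destruct H as (l1 & l2 & ->).
        exists (l1 ++ l2). eapply perm_trans; [exact P2|].
        rewrite !app_assoc. symmetry. apply Permutation_middle.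
      * intros z Hz. destruct (HU z Hz); simpl; auto.
    + exists (a :: U). split; [constructor; auto|]. split.
      * exists (a :: R1). eapply perm_trans; [apply perm_skip; exact P1|].
        apply Permutation_middle.
      * split; [exists R2; simpl; apply perm_skip; auto|].
        intros z [<-|Hz]; simpl; auto. destruct (HU z Hz); auto.
Qed.

Lemma M1a : forall p, inE s t lf rf p -> NoDup (pi lf (parr p)).
Proof.
  intros p H; induction H.
  - constructor.
  - simpl. constructor; [simpl; auto|constructor].
  - pose proof H1 as HH. destruct H1 as ((Vm & Df & Dg) & Min).
    pose proof (inE_valid H) as Vf. pose proof (inE_valid H0) as Vg.
    destruct (ldiv_sub Vf Vm Df) as (Sf & _).
    destruct (ldiv_sub Vg Vm Dg) as (Sg & _).
    destruct (union_ex IHinE1 IHinE2)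
      as (U & NU & (R1 & P1) & (R2 & P2) & HU).
    assert (HU' : forall z, In z U -> s z = psrc m).
    { intros z Hz. destruct (HU z Hz).
      - rewrite Sf. eapply (pi_src G (parr f)); eauto.
      - rewrite Sg. eapply (pi_src G (parr g)); eauto. }
    destruct (pi_surj G U HU') as (w & Cw & Pw).
    assert (Cn : common_rmul s t lf rf f g (Path (psrc m) w)).
    { split; [exact Cw|split].
      - eapply sub_ldiv; eauto. simpl. rewrite Pw. eauto.
      - eapply sub_ldiv; eauto. simpl. rewrite Pw. eauto. }
    destruct (@ldiv_sub m (Path (psrc m) w) Vm Cw (Min _ Cn)) as (_ & R & P).
    simpl in P. rewrite Pw in P.
    apply (Permutation_NoDup P) in NU. eapply NoDup_app_remove_r; eauto.
Qed.

Lemma M1b : forall L p, valid s t p -> Permutation (pi lf (parr p)) L -> NoDup L ->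
  inE s t lf rf p.
Proof.
  induction L as [|x L IH]; intros p Vp P N.
  - symmetry in P. apply Permutation_nil in P. apply pi_nil in P. destruct p as [l w]; simpl in P; subst.
    apply inE_id.
  - inversion N; subst.
    assert (Hx : In x (pi lf (parr p))) by (eapply Permutation_in; [symmetry; exact P|simpl; auto]).
    assert (Sx : s x = psrc p) by (eapply (pi_src G (parr p)); eauto).
    assert (HL : forall z, In z L -> s z = psrc p).
    { intros z Hz. eapply (pi_src G (parr p)); eauto. eapply Permutation_in; [symmetry; exact P|simpl; auto]. }
    destruct (pi_surj G L HL) as (w & Cw & Pw).
    assert (V1 : valid s t (Path (psrc p) w)) by exact Cw.
    assert (I1 : inE s t lf rf (Path (psrc p) w)) by (apply IH; auto; simpl; rewrite Pw; auto).
    assert (Va : valid s t (arrow s x)) by (unfold valid; simpl; auto).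
    apply (inE_lcm (inE_arr s t lf rf x) I1).
    split; [split; [exact Vp|split]|].
    + apply sub_ldiv with (R := L); auto.
    + apply sub_ldiv with (R := [x]); auto. simpl. rewrite Pw.
      eapply perm_trans; [exact P|]. apply Permutation_cons_append.
    + intros n (Vn & Dx & Dw).
      destruct (ldiv_sub Va Vn Dx) as (Sn & R1 & P1).
      destruct (ldiv_sub V1 Vn Dw) as (_ & R2 & P2).
      simpl in Sn, P1, P2. rewrite Pw in P2.
      assert (In x R2).
      { assert (In x (pi lf (parr n))) by (eapply Permutation_in; [symmetry; exact P1|simpl; auto]).
        apply (Permutation_in _ P2) in H. apply in_app_or in H. tauto. }
      apply in_split in H. destruct H as (l1 & l2 & ->).
      apply sub_ldiv with (R := l1 ++ l2); auto; [congruence|].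
      eapply perm_trans; [exact P2|].
      eapply perm_trans; [|apply Permutation_app_tail; symmetry; exact P].
      simpl. rewrite app_assoc. symmetry. rewrite app_comm_cons.
      eapply perm_trans; [|apply Permutation_middle]. rewrite <- app_assoc. reflexivity.
Qed.

End M1.
Unset Implicit Arguments.

Theorem proposition5p11 (Lam A : Type) (s t : A -> Lam) (lf rf : A -> A -> A)
  (HYB : qYB_map s t lf rf) (Hinv : involutive s t lf rf)
  (Hnd : nondegenerate s t lf rf) :
  forall p : path Lam A, valid s t p ->
    (inE s t lf rf p <->
      ((exists l, peq s t lf rf p (ident A l)) \/
       (exists (mu : Lam) (y1 : A) (ys : list A),
          NoDup (y1 :: ys) /\ (forall y, In y (y1 :: ys) -> t y = mu) /\
          peq s t lf rf p (Path (s (OmegaT s t rf y1 ys)) (DeltaList s t rf y1 ys))))).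
Proof.
  destruct (good_of HYB Hinv Hnd) as [G Gm].
  pose proof (bullet_spec Hnd) as Hbul.
  assert (ND : forall w l, chain s t l w ->
     NoDup (pi lf w) <-> NoDup (pi (fun x y => rf y x) (rev w))).
  { intros w l C. split.
    - intro N. destruct (chain_rev _ _ _ _ C) as [Cm _].
      pose proof (@dup_transfer Lam A t s (fun x y => rf y x) (fun x y => lf y x) Gm G
         (rev w) _ Cm) as D.
      rewrite rev_involutive in D. apply D. exact N.
    - intro N. exact (dup_transfer G Gm w l C N). }
  intros p Vp. split.
  - intro H. pose proof (M1a G H) as N.
    destruct (rev (pi (fun x y => rf y x) (rev (parr p)))) as [|y1 ys] eqn:E.
    + left. exists (psrc p).
      assert (parr p = []).
      { apply (f_equal (@rev A)) in E. rewrite rev_involutive in E. simpl in E.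
        apply pi_nil in E. apply (f_equal (@rev A)) in E. rewrite rev_involutive in E. exact E. }
      destruct p as [l w]; simpl in *; subst. split; [reflexivity|apply rst_refl].
    + right. set (mu := tgt_from t (psrc p) (parr p)).
      destruct (chain_rev _ _ _ _ Vp) as [Cm _]. fold mu in Cm.
      assert (Hy : forall y, In y (y1 :: ys) -> t y = mu).
      { intros y Hy. rewrite <- E in Hy. apply in_rev in Hy.
        exact (pi_src Gm _ _ Cm _ Hy). }
      exists mu, y1, ys. split; [|split; [exact Hy|]].
      * rewrite <- E. apply (Permutation_NoDup (Permutation_rev _)).
        apply (ND _ _ Vp). exact N.
      * assert (Hys : forall y, In y ys -> t y = mu) by (intros; apply Hy; simpl; auto).
        assert (Hy1 : t y1 = mu) by (apply Hy; simpl; auto).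
        destruct (delta_chain s t rf Hbul ys Hys y1 Hy1) as [CD TD].
        destruct (chain_rev _ _ _ _ CD) as [CDm _]. rewrite TD in CDm.
        pose proof (pi_delta s t rf Hbul ys Hys y1 Hy1) as PD.
        rewrite <- E, rev_involutive in PD.
        assert (R : clos_refl_sym_trans _ (step t s (fun x y => rf y x) (fun x y => lf y x))
                   (rev (parr p)) (rev (DeltaList s t rf y1 ys))).
        { apply (pi_inj Gm _ _ mu Cm CDm). rewrite PD. reflexivity. }
        apply rst_rev in R. rewrite !rev_involutive in R.
        assert (R' : clos_refl_sym_trans _ (step s t lf rf) (parr p) (DeltaList s t rf y1 ys)) by exact R.
        split; [|exact R'].
        destruct (rst_chain G R' (psrc p)) as [[C1 _] _].
        specialize (C1 Vp). rewrite DL_eq in C1. simpl in C1. simpl. symmetry. apply C1.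
  - intros [(l & Sp & Rp)|(mu & y1 & ys & Nd & Hy & Sp & Rp)].
    + apply (@M1b _ _ s t lf rf G (pi lf (parr p)) p Vp (Permutation_refl _)).
      pose proof (pi_rst G Rp (psrc p) Vp) as P. simpl in P.
      symmetry in P. apply Permutation_nil in P. rewrite P. constructor.
    + apply (@M1b _ _ s t lf rf G (pi lf (parr p)) p Vp (Permutation_refl _)).
      simpl in Sp, Rp.
      assert (Hys : forall y, In y ys -> t y = mu) by (intros; apply Hy; simpl; auto).
      assert (Hy1 : t y1 = mu) by (apply Hy; simpl; auto).
      assert (CD : chain s t (psrc p) (DeltaList s t rf y1 ys)) by (apply (rst_chain G Rp (psrc p)); auto).
      assert (NDD : NoDup (pi lf (DeltaList s t rf y1 ys))).
      { apply (ND _ _ CD). rewrite (pi_delta s t rf Hbul ys Hys y1 Hy1).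
        apply (Permutation_NoDup (Permutation_rev _)). exact Nd. }
      pose proof (pi_rst G Rp (psrc p) Vp) as P.
      apply (Permutation_NoDup (Permutation_sym P)). exact NDD.
Qed.
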